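(* Let $k$ be a field of characteristic $0$, let $\mathfrak n=\langle X,Z_1,Z_2\rangle$ be the $3$-dimensional Heisenberg GNLA with $\deg X=\deg Z_1=-1$, $\deg Z_2=-2$ and only non-zero bracket $[X,Z_1]=Z_2$, let $W=\langle Z_1\rangle\subset\mathfrak n_{-1}$, and for $s\ge2$ let $V=\langle Y_1,\dots,Y_s\rangle$, $\deg Y_i=-i$, be the $\mathfrak n$-module with $X.Y_i=Y_{i+1}$ ($i<s$), $X.Y_s=0$, and $Z_1,Z_2$ acting trivially. Then every special extension $\mathfrak m$ of $\mathfrak n$ by $V$ is isomorphic (as a graded Lie algebra) either to the semidirect product $\mathfrak n\ltimes V$ (non-zero brackets $[X,Z_1]=Z_2$, $[X,Y_i]=Y_{i+1}$, $i=1,\dots,s-1$), or, only when $s=3$, to the $6$-dimensional graded Lie algebra $\langle X,Z_1,Z_2,Y_1,Y_2,Y_3\rangle$ with non-zero brackets $[X,Y_1]=Y_2$, $[X,Y_2]=Y_3$, $[X,Z_1]=Z_2$, $[Z_1,Z_2]=Y_3$; this latter algebra is not isomorphic to the semidirect product. In particular, up to isomorphism there is exactly one non-trivial special extension of the $3$-dimensional Heisenberg algebra.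
   Context: A GNLA is a negatively graded Lie algebra $\bigoplus_{i\ge1}\mathfrak n_{-i}$ generated by $\mathfrak n_{-1}$. A special extension of $\mathfrak n$ by the graded $\mathfrak n$-module $V$ is a graded Lie algebra $\mathfrak m$ fitting into an exact sequence of graded Lie algebras $0\to V\to\mathfrak m\to\mathfrak n\to0$ in which $V$ is an abelian ideal and the action of $\mathfrak n=\mathfrak m/V$ on $V$ induced by the bracket is the given module structure; equivalently $\mathfrak m=\mathfrak n\oplus V$ with bracket $[(x_1,v_1),(x_2,v_2)]=([x_1,x_2],x_1.v_2-x_2.v_1+\alpha(x_1,x_2))$ for some degree-preserving $2$-cocycle $\alpha:\wedge^2\mathfrak n\to V$. *)

(* Defs.v *)
From HB Require Import structures.
From mathcomp Require Import all_boot all_order all_algebra.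
Set Implicit Arguments. Unset Strict Implicit. Unset Printing Implicit Defensive.
Import Order.TTheory GRing.Theory Num.Theory.
Local Open Scope ring_scope.

Section Defs.
Variable k : fieldType.

Definition cf (N : nat) (u : 'rV[k]_N) (i : nat) : k :=
  match (insub i : option 'I_N) with Some j => u 0 j | None => 0 end.

(* A finite-dimensional graded algebra is given on coordinates 'rV_N with a
   homogeneous basis e_0,...,e_(N-1); dg j = d means e_j has degree -d. *)
Definition homog (N : nat) (dg : nat -> nat) (d : nat) (u : 'rV[k]_N) : Prop :=
  forall j : 'I_N, dg (val j) <> d -> u 0 j = 0.

Definition graded_iso (N M : nat)
    (dg1 : nat -> nat) (br1 : 'rV[k]_N -> 'rV[k]_N -> 'rV[k]_N)
    (dg2 : nat -> nat) (br2 : 'rV[k]_M -> 'rV[k]_M -> 'rV[k]_M) : Prop :=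
  exists f : {linear 'rV[k]_N -> 'rV[k]_M},
    bijective f /\
    (forall d u, homog dg1 d u <-> homog dg2 d (f u)) /\
    (forall u v, f (br1 u v) = br2 (f u) (f v)).

(* Heisenberg GNLA n = <X, Z1, Z2> : coordinates 0 = X, 1 = Z1, 2 = Z2 *)
Definition dgn (i : nat) : nat := if i == 2%N then 2%N else 1%N.
Definition brn (x y : 'rV[k]_3) : 'rV[k]_3 :=
  \row_(j < 3) (if val j == 2%N then cf x 0 * cf y 1 - cf x 1 * cf y 0 else 0).

(* module V = <Y_1,...,Y_s>: coordinate i corresponds to Y_(i+1), degree -(i+1) *)
Definition dgV (i : nat) : nat := i.+1.
Definition actV (s : nat) (x : 'rV[k]_3) (v : 'rV[k]_s) : 'rV[k]_s :=
  \row_(j < s) (if val j == 0%N then 0 else cf x 0 * cf v (val j).-1).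

Definition special_cocycle (s : nat) (al : 'rV[k]_3 -> 'rV[k]_3 -> 'rV[k]_s) : Prop :=
  [/\ (forall (a : k) x y z, al (a *: x + y) z = a *: al x z + al y z),
      (forall (a : k) x y z, al z (a *: x + y) = a *: al z x + al z y),
      (forall x, al x x = 0),
      (forall d e x y, homog dgn d x -> homog dgn e y -> homog dgV (d + e) (al x y)) &
      (forall x y z,
         actV x (al y z) - actV y (al x z) + actV z (al x y)
         - al (brn x y) z + al (brn x z) y - al (brn y z) x = 0)].

(* m = n (+) V on coordinates 'rV_(3+s): 0,1,2 = X,Z1,Z2 ; 3+i = Y_(i+1) *)
Definition dgm (i : nat) : nat := if (i < 3)%N then dgn i else (i - 2)%N.
Definition npart (s : nat) (w : 'rV[k]_(3 + s)) : 'rV[k]_3 := \row_(j < 3) cf w (val j).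
Definition vpart (s : nat) (w : 'rV[k]_(3 + s)) : 'rV[k]_s := \row_(j < s) cf w (3 + val j).
Definition glue (s : nat) (x : 'rV[k]_3) (v : 'rV[k]_s) : 'rV[k]_(3 + s) :=
  \row_(j < 3 + s) (if (val j < 3)%N then cf x (val j) else cf v (val j - 3)).

Definition ext_br (s : nat) (al : 'rV[k]_3 -> 'rV[k]_3 -> 'rV[k]_s)
    (w1 w2 : 'rV[k]_(3 + s)) : 'rV[k]_(3 + s) :=
  let x1 := npart w1 in let x2 := npart w2 in
  let v1 := vpart w1 in let v2 := vpart w2 in
  glue (brn x1 x2) (actV x1 v2 - actV x2 v1 + al x1 x2).

Definition semidirect_br (s : nat) := ext_br (fun _ _ : 'rV[k]_3 => (0 : 'rV[k]_s)).

(* the 6-dim algebra <X,Z1,Z2,Y1,Y2,Y3> (coordinates 0..5), degrees given by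
   dgm: [X,Y1]=Y2, [X,Y2]=Y3, [X,Z1]=Z2, [Z1,Z2]=Y3 *)
Definition brB (u v : 'rV[k]_6) : 'rV[k]_6 :=
  \row_(j < 6)
    (if val j == 2%N then cf u 0 * cf v 1 - cf u 1 * cf v 0
     else if val j == 4%N then cf u 0 * cf v 3 - cf u 3 * cf v 0
     else if val j == 5%N then cf u 0 * cf v 4 - cf u 4 * cf v 0
                               + (cf u 1 * cf v 2 - cf u 2 * cf v 1)
     else 0).

End Defs.

(* Main.v *)
Require Import Defs.
From HB Require Import structures.
From mathcomp Require Import all_boot all_order all_algebra.
From Stdlib Require Import Ring Field.
Import GRing.Theory.
Local Open Scope ring_scope.

Section S.
Variable k : fieldType.
Definition kadd (x y : k) : k := x + y.
Definition kmul (x y : k) : k := x * y.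
Definition kopp (x : k) : k := - x.
Definition ksub (x y : k) : k := x - y.
Definition kinv (x : k) : k := x^-1.
Definition kdiv (x y : k) : k := x / y.
Definition kzero : k := 0.
Definition kone : k := 1.
Lemma kRth : ring_theory kzero kone kadd kmul ksub kopp (@eq k).
Proof. rewrite /kadd/kmul/ksub/kopp/kzero/kone. split=> //; [exact: add0r|exact: addrC|exact: addrA|exact: mul1r|exact: mulrC|exact: mulrA|exact: mulrDl|exact: subrr]. Qed.
Lemma kFth : field_theory kzero kone kadd kmul ksub kopp kdiv kinv (@eq k).
Proof. split=> //; first exact: kRth. rewrite /kone/kzero; by apply/eqP; rewrite oner_eq0. rewrite /kinv/kmul/kone/kzero. move=> p hp; by rewrite mulVf //; apply/eqP. Qed.
Add Field kF : kFth.
Lemma keq (x y : k) : x = y -> x = y. Proof. by []. Qed.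
Lemma kaddE (x y : k) : x + y = kadd x y. Proof. by []. Qed.
Lemma kmulE (x y : k) : x * y = kmul x y. Proof. by []. Qed.
Lemma koppE (x : k) : - x = kopp x. Proof. by []. Qed.
Lemma kinvE (x : k) : x^-1 = kinv x. Proof. by []. Qed.
Lemma kzeroE : 0 = kzero. Proof. by []. Qed.
Lemma koneE : 1 = kone. Proof. by []. Qed.
Ltac kring := apply: keq; rewrite ?kaddE ?kmulE ?koppE ?kinvE ?kzeroE ?koneE; ring.
Ltac kfield := apply: keq; rewrite ?kaddE ?kmulE ?koppE ?kinvE ?kzeroE ?koneE; field.

Lemma cf_rowE N (F : nat -> k) i :
  cf (\row_(j < N) F (val j)) i = if (i < N)%N then F i else 0.
Proof.
rewrite /cf; case: insubP => [j hj e|hn]; first by rewrite mxE -e ltn_ord.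
by rewrite (negbTE hn).
Qed.

Lemma cf_out N (u : 'rV[k]_N) i : (N <= i)%N -> cf u i = 0.
Proof. move=> h; rewrite /cf; case: insubP => [j hj _|//]. by rewrite ltnNge h in hj. Qed.

Lemma cf_val N (u : 'rV[k]_N) (j : 'I_N) : u 0 j = cf u (val j).
Proof. rewrite /cf; case: insubP => [j' hj e|]; last by rewrite ltn_ord.
by rewrite (_ : j' = j) //; apply: val_inj. Qed.

Lemma cf_inj N (u v : 'rV[k]_N) : (forall i, (i < N)%N -> cf u i = cf v i) -> u = v.
Proof. move=> h; apply/rowP => j. rewrite !cf_val. exact: h (ltn_ord j). Qed.
Lemma cfD N (u v : 'rV[k]_N) i : cf (u + v) i = cf u i + cf v i.
Proof. rewrite /cf; case: insubP => [j _ _|_]; by rewrite ?mxE ?addr0. Qed.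
Lemma cfZ N (a : k) (u : 'rV[k]_N) i : cf (a *: u) i = a * cf u i.
Proof. rewrite /cf; case: insubP => [j _ _|_]; by rewrite ?mxE ?mulr0. Qed.
Lemma cfN N (u : 'rV[k]_N) i : cf (- u) i = - cf u i.
Proof. rewrite /cf; case: insubP => [j _ _|_]; by rewrite ?mxE ?oppr0. Qed.
Lemma cfB N (u v : 'rV[k]_N) i : cf (u - v) i = cf u i - cf v i.
Proof. by rewrite cfD cfN. Qed.
Lemma cf0 N i : cf (0 : 'rV[k]_N) i = 0.
Proof. rewrite /cf; case: insubP => [j _ _|_]; by rewrite ?mxE. Qed.

Lemma cf_brn (x y : 'rV[k]_3) i :
  cf (brn x y) i = if i == 2%N then cf x 0 * cf y 1 - cf x 1 * cf y 0 else 0.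
Proof.
rewrite /brn (cf_rowE 3 (fun i => if i == 2%N then _ else _)).
by case: i => [|[|[|i]]].
Qed.

Lemma cf_actV s (x : 'rV[k]_3) (v : 'rV[k]_s) i :
  cf (actV x v) i = if (i < s)%N then (if i == 0%N then 0 else cf x 0 * cf v i.-1) else 0.
Proof. by rewrite /actV (cf_rowE s (fun i => if i == 0%N then _ else cf x 0 * cf v i.-1)). Qed.

Lemma cf_npart s (w : 'rV[k]_(3 + s)) i : cf (npart w) i = if (i < 3)%N then cf w i else 0.
Proof. by rewrite /npart (cf_rowE 3 (fun i => cf w i)). Qed.

Lemma cf_vpart s (w : 'rV[k]_(3 + s)) i : cf (vpart w) i = cf w (3 + i).
Proof.
rewrite /vpart (cf_rowE s (fun i => cf w (3 + i))).
case: ifP => // h. by rewrite cf_out // leq_add2l leqNgt h.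
Qed.

Lemma cf_glue s (x : 'rV[k]_3) (v : 'rV[k]_s) i :
  cf (glue x v) i = if (i < 3 + s)%N then (if (i < 3)%N then cf x i else cf v (i - 3)) else 0.
Proof. by rewrite /glue (cf_rowE (3 + s) (fun i => if (i < 3)%N then cf x i else cf v (i - 3))). Qed.

Lemma cf_brB (u v : 'rV[k]_6) i :
  cf (brB u v) i =
    if i == 2%N then cf u 0 * cf v 1 - cf u 1 * cf v 0
    else if i == 4%N then cf u 0 * cf v 3 - cf u 3 * cf v 0
    else if i == 5%N then cf u 0 * cf v 4 - cf u 4 * cf v 0 + (cf u 1 * cf v 2 - cf u 2 * cf v 1)
    else 0.
Proof.
rewrite /brB (cf_rowE 6 (fun i => if i == 2%N then _ else if i == 4%N then _ else if i == 5%N then _ else _)).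
by case: i => [|[|[|[|[|[|i]]]]]].
Qed.

Definition E (m : nat) : 'rV[k]_3 := \row_(j < 3) (if val j == m then 1 else 0).
Lemma cf_E m i : cf (E m) i = if (i < 3)%N then (if i == m then 1 else 0) else 0.
Proof. by rewrite /E (cf_rowE 3 (fun i => if i == m then 1 else 0)). Qed.

Lemma expand3 (x : 'rV[k]_3) : x = cf x 0 *: E 0 + (cf x 1 *: E 1 + (cf x 2 *: E 2 + 0)).
Proof.
apply: cf_inj => i hi; rewrite !cfD !cfZ !cf_E cf0 hi.
by case: i hi => [|[|[|i]]] // _; kring.
Qed.
Definition cfE := (cfD, cfZ, cfN, cf0).
Lemma homog_cf N dg d (u : 'rV[k]_N) i : homog dg d u -> dg i <> d -> cf u i = 0.
Proof. move=> h hi; rewrite /cf; case: insubP => [j _ e|//]. by apply: h; rewrite e. Qed.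
Arguments homog_cf {N dg d u i}.
Lemma homog_of_cf N dg d (u : 'rV[k]_N) :
  (forall i, (i < N)%N -> dg i <> d -> cf u i = 0) -> homog dg d u.
Proof. move=> h j hj; rewrite cf_val; exact: h (ltn_ord j) hj. Qed.

Definition alf (a b c : k) (x y : 'rV[k]_3) (i : nat) : k :=
  if i == 1%N then a * (cf x 0 * cf y 1 - cf x 1 * cf y 0)
  else if i == 2%N then b * (cf x 0 * cf y 2 - cf x 2 * cf y 0) + c * (cf x 1 * cf y 2 - cf x 2 * cf y 1)
  else 0.

Lemma E_homog0 : homog dgn 1 (E 0). Proof. apply: homog_of_cf => i hi; rewrite cf_E hi. by case: i hi => [|[|[|]]]. Qed.
Lemma E_homog1 : homog dgn 1 (E 1). Proof. apply: homog_of_cf => i hi; rewrite cf_E hi. by case: i hi => [|[|[|]]]. Qed.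
Lemma E_homog2 : homog dgn 2 (E 2). Proof. apply: homog_of_cf => i hi; rewrite cf_E hi. by case: i hi => [|[|[|]]]. Qed.

Lemma nf s (al : 'rV[k]_3 -> 'rV[k]_3 -> 'rV[k]_s) : special_cocycle al ->
  exists a b c, (forall x y i, cf (al x y) i = alf a b c x y i) /\ (s <> 3%N -> c = 0).
Proof.
case=> L1 L2 Al Dg Co.
have al0l z : al 0 z = 0.
  have h := L1 1 0 0 z; rewrite !scale1r addr0 in h.
  rewrite -{1}[al 0 z]addr0 in h; symmetry; exact: (@addrI _ (al 0 z) _ _ h).
have al0r z : al z 0 = 0.
  have h := L2 1 0 0 z; rewrite !scale1r addr0 in h.
  rewrite -{1}[al z 0]addr0 in h; symmetry; exact: (@addrI _ (al z 0) _ _ h).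
have exl x z : al x z = cf x 0 *: al (E 0) z + (cf x 1 *: al (E 1) z + (cf x 2 *: al (E 2) z + 0)).
  by rewrite {1}(expand3 x) !L1 al0l.
have exr x z : al z x = cf x 0 *: al z (E 0) + (cf x 1 *: al z (E 1) + (cf x 2 *: al z (E 2) + 0)).
  by rewrite {1}(expand3 x) !L2 al0r.
have addl x y z : al (x + y) z = al x z + al y z.
  by rewrite -[x]scale1r L1 !scale1r.
have addr x y z : al z (x + y) = al z x + al z y.
  by rewrite -[x]scale1r L2 !scale1r.
have anti x y : al y x = - al x y.
  have h := Al (x + y); rewrite addl !addr !Al add0r addr0 in h.
  by apply/eqP; rewrite -addr_eq0 addrC h.
set A := al (E 0) (E 1); set B := al (E 0) (E 2); set C := al (E 1) (E 2).
have form x y i : cf (al x y) i =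
   (cf x 0 * cf y 1 - cf x 1 * cf y 0) * cf A i
 + (cf x 0 * cf y 2 - cf x 2 * cf y 0) * cf B i
 + (cf x 1 * cf y 2 - cf x 2 * cf y 1) * cf C i.
  rewrite exl (exr y (E 0)) (exr y (E 1)) (exr y (E 2)) !Al (anti (E 0) (E 1)) (anti (E 0) (E 2)) (anti (E 1) (E 2)) -/A -/B -/C.
  rewrite !cfE; kring.
have hA i : i <> 1%N -> cf A i = 0.
  move=> hi; apply: homog_cf (Dg _ _ _ _ E_homog0 E_homog1) _. by rewrite /dgV; case.
have hB i : i <> 2%N -> cf B i = 0.
  move=> hi; apply: homog_cf (Dg _ _ _ _ E_homog0 E_homog2) _. by rewrite /dgV; case.
have hC i : i <> 2%N -> cf C i = 0.
  move=> hi; apply: homog_cf (Dg _ _ _ _ E_homog1 E_homog2) _. by rewrite /dgV; case.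
exists (cf A 1), (cf B 2), (cf C 2); split.
  move=> x y i; rewrite form /alf.
  case: (eqVneq i 1%N) => [->|h1]; first by rewrite hB // hC //; kring.
  rewrite hA; last by move/eqP; rewrite (negbTE h1).
  case: (eqVneq i 2%N) => [->|h2]; first by kring.
  rewrite hB ?hC; first kring; by move/eqP; rewrite (negbTE h2).
move=> hs.
case: (ltnP 3 s) => hs3; last first.
  apply: cf_out; rewrite leq_eqVlt in hs3; case/orP: hs3 => [/eqP//|]. by rewrite ltnS.
have b01 : brn (E 0) (E 1) = E 2.
  apply: cf_inj => i hi; rewrite cf_brn !cf_E /=. case: i hi => [|[|[|]]] //= _; kring.
have b02 : brn (E 0) (E 2) = 0.
  apply: cf_inj => i hi; rewrite cf_brn !cf_E cf0 /=. case: i hi => [|[|[|]]] //= _; kring.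
have b12 : brn (E 1) (E 2) = 0.
  apply: cf_inj => i hi; rewrite cf_brn !cf_E cf0 /=. case: i hi => [|[|[|]]] //= _; kring.
have a1 v : actV (E 1) v = 0.
  apply: cf_inj => i hi; rewrite cf_actV cf_E cf0 /= mul0r. by case: ifP => //; case: ifP.
have a2 v : actV (E 2) v = 0.
  apply: cf_inj => i hi; rewrite cf_actV cf_E cf0 /= mul0r. by case: ifP => //; case: ifP.
have h := Co (E 0) (E 1) (E 2).
rewrite b01 b02 b12 a1 a2 !al0l Al -/C in h.
have := congr1 (fun w => cf w 3) h.
rewrite !cfD !cfN !cf0 cf_actV hs3 cf_E /=. 
move=> h'. rewrite -h'. kring.
Qed.
Lemma lt3 j s : (j.+3 < 3 + s)%N = (j < s)%N.
Proof. by rewrite (_ : j.+3 = 3 + j) // ltn_add2l. Qed.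

Definition fmF s (q r t : k) (w : 'rV[k]_(3 + s)) (i : nat) : k :=
  if (i < 3)%N then cf w i
  else t * (cf w i + (if i == 3%N then q * cf w 1 else if i == 4%N then r * cf w 2 else 0)).
Arguments fmF {s}.
Definition fm s (q r t : k) (w : 'rV[k]_(3 + s)) : 'rV[k]_(3 + s) :=
  \row_(j < 3 + s) fmF q r t w (val j).
Arguments fm {s}.
Lemma cf_fm s q r t (w : 'rV[k]_(3 + s)) i :
  cf (fm q r t w) i = if (i < 3 + s)%N then fmF q r t w i else 0.
Proof. by rewrite /fm (cf_rowE (3 + s) (fmF q r t w)). Qed.

Lemma fm_lin s q r t : GRing.linear_for *:%R (@fm s q r t).
Proof.
move=> a u v; apply: cf_inj => i hi; rewrite !cfE !cf_fm hi /fmF.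
case: ifP => _; rewrite !cfE; first by kring.
case: ifP => _; first by kring. case: ifP => _; kring.
Qed.
HB.instance Definition _ s q r t := GRing.isLinear.Build k _ _ _ (@fm s q r t) (fm_lin s q r t).

Lemma fm_cancel s q r t : t != 0 -> cancel (@fm s q r t) (@fm s (-(t * q)) (-(t * r)) t^-1).
Proof.
move=> ht w; apply: cf_inj => i hi; rewrite !cf_fm hi /fmF.
have h3 : (1 < 3 + s)%N by []. have h4 : (2 < 3 + s)%N by [].
rewrite !cf_fm hi h3 h4 /fmF /=.
case: i hi => [|[|[|[|[|i]]]]] hi //=; kfield; apply/eqP; exact: ht.
Qed.
Lemma fm_cancel2 s q r t : t != 0 -> cancel (@fm s (-(t * q)) (-(t * r)) t^-1) (@fm s q r t).
Proof.
move=> ht w; apply: cf_inj => i hi; rewrite !cf_fm hi /fmF.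
have h3 : (1 < 3 + s)%N by []. have h4 : (2 < 3 + s)%N by [].
rewrite !cf_fm hi h3 h4 /fmF /=.
case: i hi => [|[|[|[|[|i]]]]] hi //=; kfield; apply/eqP; exact: ht.
Qed.

Lemma fm_homog s q r t d (w : 'rV[k]_(3 + s)) : homog dgm d w -> homog dgm d (fm q r t w).
Proof.
move=> h; apply: homog_of_cf => i hi hd; rewrite cf_fm hi /fmF.
case: ifP => hi3; first exact: homog_cf h hd.
rewrite (homog_cf h hd).
case: ifP => [/eqP e|_]; first by rewrite (homog_cf (i := 1) h); [rewrite mulr0 addr0 mulr0| subst i].
case: ifP => [/eqP e|_]; first by rewrite (homog_cf (i := 2) h); [rewrite mulr0 addr0 mulr0| subst i].
by rewrite addr0 mulr0.
Qed.

Lemma fm_iso_basic s q r t : t != 0 ->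
  bijective (@fm s q r t) /\ (forall d u, homog dgm d u <-> homog dgm d (@fm s q r t u)).
Proof.
move=> ht; split; first by exists (@fm s (-(t * q)) (-(t * r)) t^-1); [exact: fm_cancel|exact: fm_cancel2].
move=> d u; split; first exact: fm_homog.
move=> h; rewrite -(@fm_cancel s q r t ht u). exact: fm_homog.
Qed.
Lemma cf_vpart3 s (w : 'rV[k]_(3 + s)) i : cf (vpart w) i = cf w i.+3.
Proof. exact: cf_vpart. Qed.

Lemma cf_ext s (al : 'rV[k]_3 -> 'rV[k]_3 -> 'rV[k]_s) w1 w2 i :
  cf (ext_br al w1 w2) i = if (i < 3 + s)%N then
     (if (i < 3)%N then cf (brn (npart w1) (npart w2)) i
      else cf (actV (npart w1) (vpart w2)) (i - 3) - cf (actV (npart w2) (vpart w1)) (i - 3)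
           + cf (al (npart w1) (npart w2)) (i - 3)) else 0.
Proof. by rewrite /ext_br cf_glue !cfE. Qed.

Lemma cf_fm2 s q r t (w : 'rV[k]_(3 + s)) i : (2 <= s)%N -> cf (fm q r t w) i = fmF q r t w i.
Proof.
move=> hs; rewrite cf_fm; case: ifP => // hi.
have h5 : (5 <= 3 + s)%N by move: hs; rewrite -(leq_add2l 3).
have hi' : (5 <= i)%N by apply: leq_trans h5 _; rewrite leqNgt hi.
rewrite /fmF cf_out; last by rewrite leqNgt hi.
case: i hi hi' => [|[|[|[|[|i]]]]] //= _ _. kring.
Qed.

Lemma npart_fm s q r t (w : 'rV[k]_(3 + s)) : npart (fm q r t w) = npart w.
Proof. apply: cf_inj => i hi; rewrite !cf_npart hi cf_fm /fmF hi. by rewrite (leq_trans hi). Qed.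

Lemma br_semi s (al : 'rV[k]_3 -> 'rV[k]_3 -> 'rV[k]_s) a b : (2 <= s)%N ->
  (forall x y i, cf (al x y) i = alf a b 0 x y i) ->
  forall w1 w2, fm (a + b) b 1 (ext_br al w1 w2) = semidirect_br (fm (a + b) b 1 w1) (fm (a + b) b 1 w2).
Proof.
move=> hs hal w1 w2; apply: cf_inj => i hi.
rewrite /semidirect_br cf_fm hi /fmF !cf_ext hi !npart_fm.
have h1 : (1 < 3 + s)%N by []. have h2 : (2 < 3 + s)%N by [].
rewrite h1 h2 /=.
case: i hi => [|[|[|j]]] hi /=; rewrite ?cf_brn ?cf_npart /=; try kring.
have hj : (j < s)%N by rewrite -lt3.
rewrite subSS subSS subSS subn0.
rewrite !cf_actV hj !cf_vpart3 !cf_fm2 // !hal cf0 /alf /fmF /=.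
case: j hj {hi} => [|[|[|m]]] hj /=; rewrite ?cf_npart /=; kring.
Qed.

Lemma br_B (al : 'rV[k]_3 -> 'rV[k]_3 -> 'rV[k]_3) a b c : c != 0 ->
  (forall x y i, cf (al x y) i = alf a b c x y i) ->
  forall w1 w2, fm (a + b) b c^-1 (ext_br al w1 w2) = brB (fm (a + b) b c^-1 w1) (fm (a + b) b c^-1 w2).
Proof.
move=> hc hal w1 w2; apply: cf_inj => i hi.
rewrite cf_fm hi /fmF !cf_ext hi ?npart_fm cf_brB /=.
rewrite !cf_fm2 // /fmF /=.
case: i hi => [|[|[|[|[|[|j]]]]]] hi //=; rewrite ?cf_brn ?cf_npart ?cf_actV ?cf_vpart3 ?hal /alf /= ?cf_npart /=; try (kfield; apply/eqP; exact: hc).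
Qed.
Definition EN N (m : nat) : 'rV[k]_N := \row_(j < N) (if val j == m then 1 else 0).
Lemma cf_EN N m i : cf (EN N m) i = if (i < N)%N then (if i == m then 1 else 0) else 0.
Proof. by rewrite /EN (cf_rowE N (fun i => if i == m then 1 else 0)). Qed.

Lemma semi_Z2 (w : 'rV[k]_(3 + 3)) : semidirect_br w (EN (3 + 3) 2) = 0.
Proof.
apply: cf_inj => i hi; rewrite /semidirect_br cf_ext hi cf0.
case: i hi => [|[|[|[|[|[|i]]]]]] hi //=; rewrite ?cf_brn ?cf_actV ?cf_npart ?cf_vpart3 ?cf_EN ?cf0 /=; kring.
Qed.

Lemma not_iso : ~ graded_iso dgm (@brB k) dgm (@semidirect_br k 3).
Proof.
case=> f [[g fK gK] [hom hbr]].
set Z := EN (3 + 3) 2.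
have f0 : f 0 = 0 by rewrite linear0.
have finj u v : f u = f v -> u = v by move=> h; rewrite -(fK u) -(fK v) h.
set w := g Z.
have fw : f w = Z by rewrite /w gK.
have hZ : homog dgm 2 Z.
  apply: homog_of_cf => i hi hd; rewrite cf_EN hi.
  by case: i hi hd => [|[|[|i]]].
have hw : homog dgm 2 w by apply/hom; rewrite fw.
have c0 u : brB u w = 0 by apply: finj; rewrite hbr fw semi_Z2 f0.
have c1 := c0 (EN 6 0). have c2 := c0 (EN 6 1).
have w0 : w = 0.
  apply: cf_inj => i hi; rewrite cf0.
  case: i hi => [|[|[|[|[|[|i]]]]]] hi //=.
  - by have := congr1 (fun v => cf v 2) c2; rewrite cf_brB !cf_EN cf0 /= => h; first [by rewrite -h; kring | by rewrite -oppr0 -h; kring].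
  - by have := congr1 (fun v => cf v 2) c1; rewrite cf_brB !cf_EN cf0 /= => h; first [by rewrite -h; kring | by rewrite -oppr0 -h; kring].
  - by have := congr1 (fun v => cf v 5) c2; rewrite cf_brB !cf_EN cf0 /= => h; first [by rewrite -h; kring | by rewrite -oppr0 -h; kring].
  - by have := congr1 (fun v => cf v 4) c1; rewrite cf_brB !cf_EN cf0 /= => h; first [by rewrite -h; kring | by rewrite -oppr0 -h; kring].
  - by have := congr1 (fun v => cf v 5) c1; rewrite cf_brB !cf_EN cf0 /= => h; first [by rewrite -h; kring | by rewrite -oppr0 -h; kring].
  - by apply: (homog_cf hw).
have := congr1 (fun v => cf v 2) fw.
rewrite w0 f0 cf0 /Z cf_EN /= => /eqP. by rewrite eq_sym oner_eq0.
Qed.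
Definition al3 (x y : 'rV[k]_3) : 'rV[k]_3 :=
  \row_(j < 3) (if val j == 2%N then cf x 1 * cf y 2 - cf x 2 * cf y 1 else 0).
Lemma cf_al3 x y i : cf (al3 x y) i = alf 0 0 1 x y i.
Proof.
rewrite /al3 (cf_rowE 3 (fun i => if i == 2%N then _ else _)) /alf.
case: i => [|[|[|i]]] //=; kring.
Qed.

Lemma al3_cocycle : special_cocycle al3.
Proof.
split.
- move=> a x y z; apply: cf_inj => i hi; rewrite !cfE !cf_al3 /alf !cfE.
  case: i hi => [|[|[|i]]] //= _; kring.
- move=> a x y z; apply: cf_inj => i hi; rewrite !cfE !cf_al3 /alf !cfE.
  case: i hi => [|[|[|i]]] //= _; kring.
- move=> x; apply: cf_inj => i hi; rewrite !cfE !cf_al3 /alf.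
  case: i hi => [|[|[|i]]] //= _; kring.
- move=> d e x y hx hy; apply: homog_of_cf => i hi hd; rewrite cf_al3 /alf.
  case: i hi hd => [|[|[|i]]] //= _ hd; first by rewrite mul0r.
  have t1 : cf x 1 * cf y 2 = 0.
    case: (eqVneq d 1%N) => [ed|nd]; last by rewrite (homog_cf hx) ?mul0r //; move/eqP; rewrite eq_sym (negbTE nd).
    case: (eqVneq e 2%N) => [ee|ne]; last by rewrite (homog_cf (i := 2) hy) ?mulr0 // /dgn /=; move/eqP; rewrite eq_sym (negbTE ne).
    by exfalso; apply: hd; rewrite ed ee.
  have t2 : cf x 2 * cf y 1 = 0.
    case: (eqVneq d 2%N) => [ed|nd]; last by rewrite (homog_cf (i := 2) hx) ?mul0r // /dgn /=; move/eqP; rewrite eq_sym (negbTE nd).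
    case: (eqVneq e 1%N) => [ee|ne]; last by rewrite (homog_cf (i := 1) hy) ?mulr0 //; move/eqP; rewrite eq_sym (negbTE ne).
    by exfalso; apply: hd; rewrite ed ee.
  rewrite t1 t2; kring.
- move=> x y z; apply: cf_inj => i hi; rewrite !cfE !cf_actV !cf_al3 /alf !cf_brn.
  case: i hi => [|[|[|i]]] //= _; kring.
Qed.
Lemma main_k s (hs : (2 <= s)%N) :
  (forall al : 'rV[k]_3 -> 'rV[k]_3 -> 'rV[k]_s,
     special_cocycle al ->
     graded_iso dgm (ext_br al) dgm (@semidirect_br k s)
     \/ (s = 3%N /\ graded_iso dgm (ext_br al) dgm (@brB k)))
  /\ ~ graded_iso dgm (@brB k) dgm (@semidirect_br k 3)
  /\ (s = 3%N -> exists al : 'rV[k]_3 -> 'rV[k]_3 -> 'rV[k]_s,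
        special_cocycle al /\ graded_iso dgm (ext_br al) dgm (@brB k)).
Proof.
split; last split; last first.
- move=> s3; subst s; exists al3; split; first exact: al3_cocycle.
  have h1 : (1 : k)^-1 != 0 by rewrite invr_eq0 oner_neq0.
  have [bij hom] := @fm_iso_basic 3 (0 + 0) 0 1^-1 h1.
  exists (@fm 3 (0 + 0) 0 1^-1); split; first exact: bij.
  split; first exact: hom.
  apply: br_B; first exact: oner_neq0.
  exact: cf_al3.
- exact: not_iso.
move=> al hal; have [a [b [c [hf hc]]]] := @nf s al hal.
case: (eqVneq c 0) => [c0|cn0].
  left; subst c.
  have [bij hom] := @fm_iso_basic s (a + b) b 1 (oner_neq0 _).
  exists (@fm s (a + b) b 1); split; first exact: bij.
  split; first exact: hom.
  exact: br_semi.
right; case: (eqVneq s 3) => [s3|ns]; last by case/eqP: cn0; apply: hc; apply/eqP.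
subst s; split => //.
have h1 : c^-1 != 0 by rewrite invr_eq0.
have [bij hom] := @fm_iso_basic 3 (a + b) b c^-1 h1.
exists (@fm 3 (a + b) b c^-1); split; first exact: bij.
split; first exact: hom.
exact: br_B.
Qed.
End S.

Theorem mainTheorem8 (k : fieldType) (char0 : [pchar k] =i pred0)
    (s : nat) (hs : (2 <= s)%N) :
  (forall al : 'rV[k]_3 -> 'rV[k]_3 -> 'rV[k]_s,
     special_cocycle al ->
     graded_iso dgm (ext_br al) dgm (@semidirect_br k s)
     \/ (s = 3%N /\ graded_iso dgm (ext_br al) dgm (@brB k)))
  /\ ~ graded_iso dgm (@brB k) dgm (@semidirect_br k 3)
  /\ (s = 3%N -> exists al : 'rV[k]_3 -> 'rV[k]_3 -> 'rV[k]_s,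
        special_cocycle al /\ graded_iso dgm (ext_br al) dgm (@brB k)).
Proof. exact: main_k. Qed.
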